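(* Consider a network update in which a set of flow segments, each with a traffic volume, is moved from old subpaths to new subpaths, executed by the distributed scheduling heuristic ez-Schedule described in the context, starting from an initial configuration in which, for every directed link, the sum of volumes of the segments routed over it does not exceed its capacity. Then ez-Schedule is correct: at every time during the update and as long as update operations are executed, no link carries traffic exceeding its capacity (the update is congestion-free).
   Context: Each directed link has a capacity. Each switch $s$ maintains, for each of its outgoing links $\ell$, the residual capacity of $\ell$, namely the capacity of $\ell$ minus the total volume of the segments whose currently installed forwarding entries at $s$ route over $\ell$. Each segment is updated as in \textsc{Basic-Update} (GoodToMove messages propagate backwards along the new subpath, each switch installing its new entry before forwarding GoodToMove; after the first switch switches, Removing messages propagate along the old subpath and remove old entries, which frees the corresponding volume on the old links). ez-Schedule: each segment update is assigned by the controller a priority (high if it lies on a critical cycle of the dependency graph between update operations and link capacities, medium if it lies only on non-critical cycles, low otherwise). A switch receiving GoodToMove for a segment $S$ whose new entry uses outgoing link $\ell$ installs the new entry only if the residual capacity of $\ell$ is at least the volume of $S$; if there are pending higher-priority operations on $\ell$, it installs the entry only if in addition the residual capacity minus the volume of $S$ remains sufficient for those higher-priority operations; otherwise it waits until capacity is freed by removals. Upon installing, it decreases the residual capacity of $\ell$ by the volume of $S$. *)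

(* Defs.v *)
From HB Require Import structures.
From mathcomp Require Import all_boot all_order all_algebra.
Set Implicit Arguments. Unset Strict Implicit. Unset Printing Implicit Defensive.
Import Order.TTheory GRing.Theory Num.Theory.
Local Open Scope ring_scope.

Section EzSchedule.
Variables (R : realDomainType) (V Seg : finType).
Variables (cap : V -> V -> R)
          (vol : Seg -> R)
          (oldp newp : Seg -> seq V)
          (prio : Seg -> 'I_3).        (* 0 = low, 1 = medium, 2 = high *)

Definition hop_is (p : seq V) (i : nat) (u v : V) : bool :=
  [&& i.+1 < size p, nth u p i == u & nth u p i.+1 == v]%N.

(* Forwarding state: which entries are installed (indexed by the position
   of the switch along the old / new subpath of each segment), and the
   residual capacity each switch u maintains for its outgoing link (u,v). *)
Record state := State {
  inst_old : Seg -> nat -> bool;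
  inst_new : Seg -> nat -> bool;
  resid    : V -> V -> R }.

(* total volume of segments whose installed entries route over (u,v):
   an upper bound on the traffic carried by link (u,v). *)
Definition load_of (io inw : Seg -> nat -> bool) (u v : V) : R :=
  \sum_(S : Seg)
     ((\sum_(i < size (oldp S)) (if io S i && hop_is (oldp S) i u v
                                 then vol S else 0))
    + (\sum_(i < size (newp S)) (if inw S i && hop_is (newp S) i u v
                                 then vol S else 0))).

Definition load (st : state) (u v : V) : R :=
  load_of (inst_old st) (inst_new st) u v.

Definition pending_hi (st : state) (S : Seg) (u v : V) : R :=
  \sum_(T : Seg | (prio S < prio T)%N)
     \sum_(j < size (newp T))
        (if ~~ inst_new st T j && hop_is (newp T) j u v then vol T else 0).

Definition init_old : Seg -> nat -> bool := fun S i => (i.+1 < size (oldp S))%N.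
Definition init_new : Seg -> nat -> bool := fun _ _ => false.

Definition init_state : state :=
  State init_old init_new (fun u v => cap u v - load_of init_old init_new u v).

Definition upd_entry (f : Seg -> nat -> bool) (S : Seg) (i : nat) (b : bool) :=
  fun T j => if (T == S) && (j == i)%N then b else f T j.

Definition upd_resid (r : V -> V -> R) (u v : V) (x : R) :=
  fun a b => if (a == u) && (b == v) then x else r a b.

Inductive step : state -> state -> Prop :=
  (* the switch at position i of the new subpath of S receives GoodToMove
     (sent by its successor: the last switch initiates, any other successor
     sends it once it has installed its own new entry), and installs its new
     entry on link (u,v) only if the residual capacity suffices for S and
     for the pending higher-priority operations on (u,v) *)
  | step_install st S i u v :
      hop_is (newp S) i u v ->
      ~~ inst_new st S i ->
      (i.+2 = size (newp S) \/ inst_new st S i.+1)%N ->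
      vol S + pending_hi st S u v <= resid st u v ->
      step st (State (inst_old st) (upd_entry (inst_new st) S i true)
                     (upd_resid (resid st) u v (resid st u v - vol S)))
  (* the switch at position i of the old subpath of S receives Removing
     (the first switch after it has switched to its new entry, any other
     switch after its predecessor removed its old entry) and removes its
     old entry, freeing the volume of S on link (u,v) *)
  | step_remove st S i u v :
      hop_is (oldp S) i u v ->
      inst_old st S i ->
      (if i is j.+1 then ~~ inst_old st S j else inst_new st S 0%N) ->
      step st (State (upd_entry (inst_old st) S i false) (inst_new st)
                     (upd_resid (resid st) u v (resid st u v + vol S))).

Inductive reachable : state -> Prop :=
  | reach_init : reachable init_state
  | reach_step st st' : reachable st -> step st st' -> reachable st'.

End EzSchedule.

(* Main.v *)
Require Import Defs.
From HB Require Import structures.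
From mathcomp Require Import all_boot all_order all_algebra.
From mathcomp Require Import ring lra.
Import Order.TTheory GRing.Theory Num.Theory.
Local Open Scope ring_scope.

Lemma hop_uniq (V : finType) (p : seq V) i u v a b :
  hop_is p i u v -> hop_is p i a b = (a == u) && (b == v).
Proof.
rewrite /hop_is => /and3P [Hs /eqP Hu /eqP Hv].
rewrite Hs /= (set_nth_default u a Hs) (set_nth_default u a (ltnW Hs)) Hu Hv.
by rewrite [a == u]eq_sym [b == v]eq_sym.
Qed.

Lemma sum_upd (R : realDomainType) (Seg : finType) (n : Seg -> nat)
  (f : Seg -> nat -> bool) (P : Seg -> nat -> bool) (w : Seg -> R) S i b :
  (i < n S)%N ->
  \sum_(T : Seg) \sum_(j < n T) (if upd_entry f S i b T j && P T j then w T else 0)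
  = \sum_(T : Seg) \sum_(j < n T) (if f T j && P T j then w T else 0)
    - (if f S i && P S i then w S else 0) + (if b && P S i then w S else 0).
Proof.
move=> Hi.
rewrite (bigD1 S) //= [in RHS](bigD1 S) //=.
rewrite (bigD1 (Ordinal Hi)) //= [in RHS](bigD1 (Ordinal Hi)) //=.
rewrite {1}/upd_entry !eqxx /=.
have E1 : \sum_(j < n S | j != Ordinal Hi)
    (if upd_entry f S i b S j && P S j then w S else 0)
  = \sum_(j < n S | j != Ordinal Hi) (if f S j && P S j then w S else 0).
  apply: eq_bigr => j Hj; rewrite /upd_entry eqxx /=.
  by have -> : (j == i :> nat) = false by apply/negbTE; move: Hj; apply: contra => /eqP H; apply/eqP/val_inj.
have E2 : \sum_(T | T != S) \sum_(j < n T)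
    (if upd_entry f S i b T j && P T j then w T else 0)
  = \sum_(T | T != S) \sum_(j < n T) (if f T j && P T j then w T else 0).
  apply: eq_bigr => T HT; apply: eq_bigr => j _.
  by rewrite /upd_entry (negbTE HT).
rewrite E1 E2.
ring.
Qed.

Lemma load_split (R : realDomainType) (V Seg : finType) (vol : Seg -> R)
  (oldp newp : Seg -> seq V) io inw a b :
  load_of vol oldp newp io inw a b =
  \sum_(T : Seg) \sum_(j < size (oldp T)) (if io T j && hop_is (oldp T) j a b then vol T else 0)
  + \sum_(T : Seg) \sum_(j < size (newp T)) (if inw T j && hop_is (newp T) j a b then vol T else 0).
Proof. by rewrite /load_of big_split. Qed.

Lemma hop_lt (V : finType) (p : seq V) i u v : hop_is p i u v -> (i < size p)%N.
Proof. by case/and3P => H _ _; apply: ltnW. Qed.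

Theorem theorem3 (R : realDomainType) (V Seg : finType) (adj : rel V)
    (cap : V -> V -> R) (vol : Seg -> R) (oldp newp : Seg -> seq V)
    (prio : Seg -> 'I_3) :
  (forall u v, 0 <= cap u v) ->
  (forall S, 0 <= vol S) ->
  (* well-formed update: old and new subpaths are nonempty simple paths
     over directed links with the same endpoints *)
  (forall S, oldp S != [::] /\ newp S != [::]) ->
  (forall S, uniq (oldp S) /\ uniq (newp S)) ->
  (forall S x, head x (oldp S) = head x (newp S)
               /\ last x (oldp S) = last x (newp S)) ->
  (forall S i u v, hop_is (oldp S) i u v -> adj u v) ->
  (forall S i u v, hop_is (newp S) i u v -> adj u v) ->
  (* initial configuration respects capacities *)
  (forall u v, adj u v ->
     load_of vol oldp newp (init_old oldp) (@init_new Seg) u v <= cap u v) ->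
  (* every state reached by ez-Schedule is congestion-free *)
  forall st, reachable cap vol oldp newp prio st ->
  forall u v, adj u v -> load vol oldp newp st u v <= cap u v.
Proof.
move=> Hcap Hvol _ _ _ Hadjo Hadjn Hinit st Hr.
suff [Heq Hpos] : (forall a b, resid st a b = cap a b - load vol oldp newp st a b)
             /\ (forall a b, adj a b -> 0 <= resid st a b).
  by move=> u v Huv; have := Hpos u v Huv; rewrite Heq subr_ge0.
elim: Hr => [|st0 st' _ [IHeq0 IHpos0] Hs].
  split=> a b //= Hab; by rewrite subr_ge0 Hinit.
case: Hs IHeq0 IHpos0 => {st'} [st1 S i u v Hh Hn _ Hle | st1 S i u v Hh Ho _] IHeq IHpos; split => a b /=.
- rewrite /load /= load_split (@sum_upd _ _ (fun T => size (newp T)) _ (fun T j => hop_is (newp T) j a b)) ?(hop_lt _ _ _ _ _ Hh) // (negbTE Hn) /=.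
  rewrite (@hop_uniq _ _ _ _ _ a b Hh) /upd_resid.
  case: ifP => Hab.
    case/andP: Hab => /eqP -> /eqP ->.
    rewrite IHeq /load load_split; lra.
  by rewrite IHeq /load load_split subr0 addr0.
- move=> Hab; rewrite /upd_resid; case: ifP => _; last exact: IHpos.
  rewrite subr_ge0 (le_trans _ Hle) // lerDl /pending_hi.
  apply: sumr_ge0 => T _; apply: sumr_ge0 => j _; by case: ifP.
- rewrite /load /= load_split (@sum_upd _ _ (fun T => size (oldp T)) _ (fun T j => hop_is (oldp T) j a b)) ?(hop_lt _ _ _ _ _ Hh) // Ho /=.
  rewrite (@hop_uniq _ _ _ _ _ a b Hh) /upd_resid.
  case: ifP => Hab.
    case/andP: Hab => /eqP -> /eqP ->.
    rewrite IHeq /load load_split; lra.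
  by rewrite IHeq /load load_split subr0 addr0.
- move=> Hab; rewrite /upd_resid; case: ifP => [/andP [/eqP Ha /eqP Hb]|_]; last exact: IHpos.
  subst a b; apply: addr_ge0; [exact: IHpos | exact: Hvol].
Qed.
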